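(* Suppose $g\in\mathcal R_n^f(\{y\},Z,k)$ for some $y\in Y$ and $k\ge1$, and suppose either (a) $X$ and $Y$ are metric spaces and $Z\subset M$ is closed, or (b) $Z=M$ and $X,Y$ are paracompact. Then there exist a neighborhood $V_y$ of $y$ in $Y$ and $\delta_y>0$ such that $g'\in\mathcal R_n^f(\{y'\},Z,k)$ whenever $y'\in V_y$ and $g'\in C(X,M)$ satisfies $\rho(g'(x),g(x))<\delta_y$ for all $x\in f^{-1}(y')$.
   Context: Let $(M,\rho)$ be a complete metric space, $Z\subset M$ closed, $n\ge0$, and $f\colon X\to Y$ a perfect surjection with $\dim f\le n$. For $H\subset Y$ and $k\ge1$, $\mathcal R_n^f(H,Z,k)$ is the set of $g\in C(X,M)$ such that for each $y\in H$ the set $g(f^{-1}(y))\cap Z$ can be covered by a family of open subsets of $M$ of mesh $\le1/k$ and order $\le n$ (every point of $M$ lies in at most $n+1$ members of the family). *)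

(* Defs.v *)
From Stdlib Require Import Reals List.
Open Scope R_scope.

Record TopSpace := {
  tpt :> Type;
  is_open : (tpt -> Prop) -> Prop;
  open_full : is_open (fun _ => True);
  open_inter : forall U V, is_open U -> is_open V -> is_open (fun x => U x /\ V x);
  open_union : forall F : (tpt -> Prop) -> Prop,
      (forall U, F U -> is_open U) -> is_open (fun x => exists U, F U /\ U x)
}.

Definition is_closed (X : TopSpace) (C : X -> Prop) : Prop :=
  is_open X (fun x => ~ C x).

Definition hausdorff (X : TopSpace) : Prop :=
  forall a b : X, a <> b -> exists U V, is_open X U /\ is_open X V /\ U a /\ V b /\
    (forall z, U z -> V z -> False).

Definition compact_set (X : TopSpace) (K : X -> Prop) : Prop :=
  forall F : (X -> Prop) -> Prop,
    (forall U, F U -> is_open X U) ->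
    (forall x, K x -> exists U, F U /\ U x) ->
    exists l : list (X -> Prop), (forall U, In U l -> F U) /\
      (forall x, K x -> exists U, In U l /\ U x).

Definition paracompact (X : TopSpace) : Prop :=
  hausdorff X /\
  forall F : (X -> Prop) -> Prop,
    (forall U, F U -> is_open X U) ->
    (forall x, exists U, F U /\ U x) ->
    exists G : (X -> Prop) -> Prop,
      (forall V, G V -> is_open X V) /\
      (forall x, exists V, G V /\ V x) /\
      (forall V, G V -> exists U, F U /\ forall x, V x -> U x) /\
      (forall x, exists W, is_open X W /\ W x /\
         exists l : list (X -> Prop),
           forall V, G V -> (exists z, W z /\ V z) -> In V l).

(* Covering (Cech-Lebesgue) dimension of the subspace A of X is <= n:
   every finite cover of A by open sets has a finite open refinement
   (relative to A) covering A of order <= n. *)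
Definition dim_le (X : TopSpace) (A : X -> Prop) (n : nat) : Prop :=
  forall l : list (X -> Prop),
    (forall U, In U l -> is_open X U) ->
    (forall x, A x -> exists U, In U l /\ U x) ->
    exists l' : list (X -> Prop),
      (forall V, In V l' -> is_open X V) /\
      (forall x, A x -> exists V, In V l' /\ V x) /\
      (forall V, In V l' -> exists U, In U l /\ forall x, A x -> V x -> U x) /\
      (forall x, A x ->
         forall idx : list nat, NoDup idx ->
           (forall i, In i idx -> exists V, nth_error l' i = Some V /\ V x) ->
           (length idx <= S n)%nat).

Definition continuous (X Y : TopSpace) (f : X -> Y) : Prop :=
  forall U, is_open Y U -> is_open X (fun x => U (f x)).

Definition closed_map (X Y : TopSpace) (f : X -> Y) : Prop :=
  forall C, is_closed X C -> is_closed Y (fun y => exists x, C x /\ f x = y).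

Definition perfect (X Y : TopSpace) (f : X -> Y) : Prop :=
  hausdorff X /\ continuous X Y f /\ closed_map X Y f /\
  forall y, compact_set X (fun x => f x = y).

Definition surjective {A B} (f : A -> B) : Prop := forall b, exists a, f a = b.

Definition dim_map_le (X Y : TopSpace) (f : X -> Y) (n : nat) : Prop :=
  forall y, dim_le X (fun x => f x = y) n.

Definition is_metric {T : Type} (d : T -> T -> R) : Prop :=
  (forall x, d x x = 0) /\ (forall x y, d x y = 0 -> x = y) /\
  (forall x y, d x y = d y x) /\ (forall x y z, d x z <= d x y + d y z).

Definition metric_open {T : Type} (d : T -> T -> R) (U : T -> Prop) : Prop :=
  forall x, U x -> exists e, 0 < e /\ forall y, d x y < e -> U y.

Definition complete_metric {T : Type} (d : T -> T -> R) : Prop :=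
  forall u : nat -> T,
    (forall e, 0 < e -> exists N, forall p q, (N <= p)%nat -> (N <= q)%nat -> d (u p) (u q) < e) ->
    exists l, forall e, 0 < e -> exists N, forall p, (N <= p)%nat -> d (u p) l < e.

Definition metrizable (X : TopSpace) : Prop :=
  exists d : X -> X -> R, is_metric d /\ forall U, is_open X U <-> metric_open d U.

Definition cont_to_metric (X : TopSpace) {M : Type} (rho : M -> M -> R) (g : X -> M) : Prop :=
  forall U, metric_open rho U -> is_open X (fun x => U (g x)).

Definition good_family {M : Type} (rho : M -> M -> R) (F : (M -> Prop) -> Prop)
    (eps : R) (n : nat) : Prop :=
  (forall U, F U -> metric_open rho U) /\
  (forall U, F U -> forall a b, U a -> U b -> rho a b <= eps) /\
  (forall p, forall l : list (M -> Prop), NoDup l ->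
       (forall U, In U l -> F U /\ U p) -> (length l <= S n)%nat).

Definition Rnf (X Y : TopSpace) (f : X -> Y) {M : Type} (rho : M -> M -> R)
    (n : nat) (H : Y -> Prop) (Z : M -> Prop) (k : nat) (g : X -> M) : Prop :=
  cont_to_metric X rho g /\
  forall y, H y -> exists F : (M -> Prop) -> Prop,
    good_family rho F (1 / INR k) n /\
    forall x, f x = y -> Z (g x) -> exists U, F U /\ U (g x).

(* Main.v *)
Require Import Defs.
From Stdlib Require Import Reals List Lra Classical FunctionalExtensionality PropExtensionality.
Open Scope R_scope.

Lemma ball_open {M : Type} (rho : M -> M -> R) (Hmet : is_metric rho) p e :
  metric_open rho (fun q => rho p q < e).
Proof.
  destruct Hmet as [_ [_ [_ Ht]]].
  intros q Hq. exists (e - rho p q). split; [lra|].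
  intros r Hr. specialize (Ht p q r). lra.
Qed.

Lemma delta_list {X : TopSpace} {M : Type} (rho : M -> M -> R) (g : X -> M)
  (Cov : M -> Prop) (Fam : (X -> Prop) -> Prop)
  (HF : forall O, Fam O -> exists p e, 0 < e /\
          (forall q, rho p q < 2 * e -> Cov q) /\ O = (fun z => rho p (g z) < e))
  (Ht : forall x y z, rho x z <= rho x y + rho y z) :
  forall l : list (X -> Prop), (forall O, In O l -> Fam O) ->
  exists d, 0 < d /\ forall O, In O l -> forall z, O z -> forall q, rho (g z) q < d -> Cov q.
Proof.
  induction l as [|O l IH]; intros Hl.
  - exists 1. split; [lra|]. intros O [].
  - destruct IH as [d [Hd Hd']]. { intros; apply Hl; right; auto. }
    destruct (HF O (Hl O (or_introl eq_refl))) as [p [e [He [Hc HO]]]].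
    exists (Rmin d e). split. { apply Rmin_pos; auto. }
    intros O' [<-|Hin] z Hz q Hq.
    + subst O. apply Hc. specialize (Ht p (g z) q).
      pose proof (Rmin_r d e). lra.
    + apply (Hd' O' Hin z Hz). pose proof (Rmin_l d e). lra.
Qed.

Theorem lemma2p2
  (M : Type) (rho : M -> M -> R) (Hmet : is_metric rho) (Hcompl : complete_metric rho)
  (Z : M -> Prop) (HZ : metric_open rho (fun p => ~ Z p))
  (n : nat) (X Y : TopSpace) (f : X -> Y)
  (Hperf : perfect X Y f) (Hsurj : surjective f) (Hdim : dim_map_le X Y f n)
  (y : Y) (k : nat) (Hk : (1 <= k)%nat) (g : X -> M)
  (Hg : Rnf X Y f rho n (fun y0 => y0 = y) Z k g)
  (Hcase : (metrizable X /\ metrizable Y)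
           \/ ((forall p, Z p) /\ paracompact X /\ paracompact Y)) :
  exists V : Y -> Prop, is_open Y V /\ V y /\
  exists delta : R, 0 < delta /\
    forall (y' : Y) (g' : X -> M), V y' ->
      cont_to_metric X rho g' ->
      (forall x, f x = y' -> rho (g' x) (g x) < delta) ->
      Rnf X Y f rho n (fun y0 => y0 = y') Z k g'.
Proof.
  destruct Hperf as [_ [_ [Hclosed Hcomp]]].
  destruct Hg as [Hgc Hg]. destruct (Hg y eq_refl) as [F [Hgood HcovF]].
  pose proof Hmet as [H0 [_ [Hsym Ht]]].
  set (Cov := fun q => (exists U, F U /\ U q) \/ ~ Z q).
  set (Fam := fun O : X -> Prop => exists p e, 0 < e /\
          (forall q, rho p q < 2 * e -> Cov q) /\ O = (fun z => rho p (g z) < e)).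
  destruct (Hcomp y Fam) as [l [Hl1 Hl2]].
  - intros O [p [e [_ [_ ->]]]]. apply (Hgc (fun q => rho p q < e)). apply ball_open; auto.
  - intros x Hx.
    assert (He : exists e, 0 < e /\ forall q, rho (g x) q < e -> Cov q).
    { destruct (classic (Z (g x))) as [Hz|Hz].
      + destruct (HcovF x Hx Hz) as [U [HU HUx]].
        destruct Hgood as [Hop _].
        destruct (Hop U HU (g x) HUx) as [e [He He']].
        exists e; split; auto. intros q Hq; left; exists U; auto.
      + destruct (HZ (g x) Hz) as [e [He He']].
        exists e; split; auto. intros q Hq; right; auto. }
    destruct He as [e [He He']].
    exists (fun z => rho (g x) (g z) < e / 2). split.
    + exists (g x), (e / 2). split; [lra|]. split; auto.
      intros q Hq. apply He'. lra.
    + rewrite H0. lra.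
  - destruct (delta_list rho g Cov Fam) with (l := l) as [d [Hd Hd']]; auto.
    set (A := fun z => exists O, In O l /\ O z).
    assert (HA : is_open X A).
    { apply (open_union X (fun O => In O l)). intros O HO.
      destruct (Hl1 O HO) as [p [e [_ [_ ->]]]]. apply (Hgc (fun q => rho p q < e)), ball_open; auto. }
    assert (HAc : is_closed X (fun z => ~ A z)).
    { unfold is_closed.
      replace (fun x => ~ ~ A x) with A; auto.
      apply functional_extensionality; intro x; apply propositional_extensionality.
      split; [tauto|apply NNPP]. }
    exists (fun y0 => ~ exists x, ~ A x /\ f x = y0). split.
    { apply (Hclosed _ HAc). }
    split.
    { intros [x [HnA Hx]]. apply HnA. destruct (Hl2 x Hx) as [O [HO HOx]].
      exists O; auto. }
    exists d. split; auto.
    intros y' g' HV Hg'c Hclose. split; auto.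
    intros y0 ->. exists F. split; auto.
    intros x Hx HZx.
    assert (HAx : A x).
    { apply NNPP. intro HnA. apply HV. exists x; auto. }
    destruct HAx as [O [HO HOx]].
    assert (Hq : rho (g x) (g' x) < d) by (rewrite Hsym; apply Hclose; auto).
    destruct (Hd' O HO x HOx (g' x) Hq) as [HC|HC]; auto.
    contradiction.
Qed.
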